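(* Let $M>0$, $T>0$, $X=[0,M]$ periodic, and fix $n\in\mathbf N$, $n\ge4$. Let $a,b$ be functions on $X\times[0,T]$, periodic in $x$, with $a\in C([0,T];C^{n+3})$, $a_t\in C([0,T];C^n)$, $b\in C([0,T];C^{n+2})$, $b_t\in C([0,T];C^n)$, and suppose there is $a_0>0$ with $a(x,t)\ge a_0$ for all $x,t$, and that $\bar\delta(t):=\frac1M\int_0^M\frac{b(y,t)}{|a(y,t)|}dy\ge0$ for all $t\in[0,T]$. (The lower-order coefficients $c,d\in C([0,T];C^n)$, $e\in L^\infty([0,T];H^n)$ play no role.) Define $$g_n(x,t):=\big(a(x,t)\big)^{1/2-n/3}\exp\Big[-\frac13\int_0^x\Big(\frac{b(y,t)}{a(y,t)}-\bar\delta(t)\Big)dy\Big].$$ Then $g_n$ satisfies: (C1) there is a constant $k_g>1$ with $k_g^{-1}\le g_n(x,t)\le k_g$ for all $x,t$; (C2) $g_n\in C([0,T];C^{n+3})$ and $\partial_tg_n\in C([0,T];C^n)$; (C3) $g_n$ and its first $n$ derivatives satisfy periodic boundary conditions; (C4) $\big(\tfrac32-n\big)a_x-b-3a\frac{\partial_xg_n}{g_n}\le0$ for all $x\in X$, $t\in[0,T]$.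
   Context: $C^k$ and $H^n$ denote spaces of $M$-periodic functions on $X$. *)

(* Defs.v *)
From Stdlib Require Import Reals.
From Coquelicot Require Import Coquelicot.
Open Scope R_scope.

(* f is M-periodic on R (models a function on the periodic interval X = [0,M]). *)
Definition periodic (M : R) (f : R -> R) : Prop := forall x, f (x + M) = f x.

Definition Ck (M : R) (k : nat) (f : R -> R) : Prop :=
  periodic M f /\
  (forall j, (j <= k)%nat -> forall x, ex_derive_n f j x) /\
  (forall x, continuous (Derive_n f k) x).

(* u : R -> R -> R, u x t.  u belongs to C([0,T]; C^k): every time slice is in C^k,
   and t |-> u(.,t) is continuous on [0,T] for the C^k norm
   (sup norms of the x-derivatives of order 0..k). *)
Definition CtCk (M T : R) (k : nat) (u : R -> R -> R) : Prop :=
  (forall t, 0 <= t <= T -> Ck M k (fun x => u x t)) /\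
  (forall j, (j <= k)%nat -> forall t0, 0 <= t0 <= T ->
     forall eps, 0 < eps -> exists delta, 0 < delta /\
       forall t, 0 <= t <= T -> Rabs (t - t0) < delta ->
         forall x, Rabs (Derive_n (fun y => u y t) j x
                         - Derive_n (fun y => u y t0) j x) <= eps).

Definition tderiv (T : R) (u ut : R -> R -> R) : Prop :=
  forall x t, 0 <= t <= T ->
    forall eps, 0 < eps -> exists delta, 0 < delta /\
      forall s, 0 <= s <= T -> 0 < Rabs (s - t) < delta ->
        Rabs ((u x s - u x t) / (s - t) - ut x t) <= eps.

Definition deltabar (M : R) (a b : R -> R -> R) (t : R) : R :=
  / M * RInt (fun y => b y t / Rabs (a y t)) 0 M.

Definition gn (M : R) (n : nat) (a b : R -> R -> R) (x t : R) : R :=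
  Rpower (a x t) (1/2 - INR n / 3) *
  exp (- (1/3) * RInt (fun y => b y t / a y t - deltabar M a b t) 0 x).

(* Main.v *)
Require Import Defs.
From Stdlib Require Import Reals Lra Lia ZArith ClassicalEpsilon Classical FunctionalExtensionality.
From Coquelicot Require Import Coquelicot.
Open Scope R_scope.

Lemma per_shift (M:R) (f:R->R) : (forall x, f (x+M) = f x) ->
  forall n x, f (x + INR n * M) = f x /\ f (x - INR n * M) = f x.
Proof.
  intros Hp n; induction n as [|n IH]; intros x.
  - simpl. split; f_equal; ring.
  - rewrite S_INR. split.
    + replace (x + (INR n + 1) * M) with ((x + INR n * M) + M) by ring.
      rewrite Hp. apply IH.
    + rewrite <- (Hp (x - (INR n + 1) * M)).
      replace (x - (INR n + 1) * M + M) with (x - INR n * M) by ring. apply IH.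
Qed.

Lemma per_reduce (M:R) : 0 < M -> forall x, exists y n, 0 <= y <= M /\
   (x = y + INR n * M \/ x = y - INR n * M).
Proof.
  intros HM x. destruct (archimed (x / M)) as [H1 H2].
  set (k := (up (x/M) - 1)%Z).
  assert (Hk1 : IZR k <= x / M) by (unfold k; rewrite minus_IZR; lra).
  assert (Hk2 : x / M < IZR k + 1) by (unfold k; rewrite minus_IZR; lra).
  assert (Hk1' : IZR k * M <= x).
  { apply Rmult_le_compat_r with (r:=M) in Hk1; [|lra].
    unfold Rdiv in Hk1. rewrite Rmult_assoc, Rinv_l in Hk1; lra. }
  assert (Hk2' : x < IZR k * M + M).
  { apply Rmult_lt_compat_r with (r:=M) in Hk2; [|lra].
    unfold Rdiv in Hk2. rewrite Rmult_assoc, Rinv_l in Hk2; lra. }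
  exists (x - IZR k * M).
  destruct (Z_le_gt_dec 0 k) as [Hz|Hz].
  - exists (Z.to_nat k). split; [lra|]. left.
    rewrite INR_IZR_INZ, Z2Nat.id by lia. ring.
  - exists (Z.to_nat (- k)). split; [lra|]. right.
    rewrite INR_IZR_INZ, Z2Nat.id by lia. rewrite opp_IZR. ring.
Qed.

Lemma per_eq (M:R) (f:R->R) : 0 < M -> (forall x, f (x+M) = f x) ->
  forall x, exists y, 0 <= y <= M /\ f x = f y.
Proof.
  intros HM Hp x. destruct (per_reduce M HM x) as (y & n & Hy & [->| ->]);
  exists y; split; auto; apply (per_shift M f Hp n y).
Qed.

Lemma slice_bound (M:R) (f:R->R) : 0 < M -> (forall x, f (x+M) = f x) ->
  (forall x, continuous f x) -> exists B, forall x, Rabs (f x) <= B.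
Proof.
  intros HM Hp Hc.
  assert (Hc' : forall c, 0 <= c <= M -> continuity_pt f c).
  { intros c _. apply continuity_pt_filterlim. apply Hc. }
  destruct (continuity_ab_maj f 0 M ltac:(lra) Hc') as (X1 & HX1 & _).
  destruct (continuity_ab_min f 0 M ltac:(lra) Hc') as (X2 & HX2 & _).
  exists (Rmax (Rabs (f X1)) (Rabs (f X2))). intros x.
  destruct (per_eq M f HM Hp x) as (y & Hy & ->).
  specialize (HX1 y Hy). specialize (HX2 y Hy).
  unfold Rabs, Rmax; repeat destruct Rcase_abs; repeat destruct Rle_dec; lra.
Qed.

Lemma compact_glob (T:R) (P : R -> R -> Prop) : 0 < T ->
 (forall t B B', B <= B' -> P t B -> P t B') ->
 (forall t0, 0 <= t0 <= T -> exists d, 0 < d /\ exists B, forall t, 0<=t<=T ->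
     Rabs (t-t0) < d -> P t B) ->
 exists B, forall t, 0<=t<=T -> P t B.
Proof.
  intros HT Hmono H.
  assert (H' : forall t0, exists d:posreal, 0<=t0<=T -> exists B, forall t, 0<=t<=T ->
     Rabs (t-t0) < d -> P t B).
  { intros t0. destruct (Rle_dec 0 t0); destruct (Rle_dec t0 T).
    - destruct (H t0 ltac:(lra)) as (d & Hd & HB). exists (mkposreal d Hd). intros _. exact HB.
    - exists (mkposreal 1 Rlt_0_1). intros; lra.
    - exists (mkposreal 1 Rlt_0_1). intros; lra.
    - exists (mkposreal 1 Rlt_0_1). intros; lra. }
  set (delta := fun t => proj1_sig (constructive_indefinite_description _ (H' t))).
  assert (Hdel : forall t0, 0<=t0<=T -> exists B, forall t, 0<=t<=T ->
     Rabs (t-t0) < delta t0 -> P t B).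
  { intros t0. unfold delta. destruct (constructive_indefinite_description _ (H' t0)); simpl; auto. }
  destruct (compactness_value_1d 0 T (fun t => pos_div_2 (delta t))) as (d & Hd).
  assert (Hk : forall k:nat, exists B, forall t, 0<=t<=T -> t <= INR k * d -> P t B).
  { induction k as [|k IH].
    - destruct (Hdel 0 ltac:(lra)) as (B & HB). exists B. intros t Ht Ht0.
      apply HB; auto. simpl in Ht0. replace (t - 0) with 0 by lra.
      rewrite Rabs_R0. apply cond_pos.
    - destruct IH as (B1 & HB1).
      destruct (Rlt_dec T (INR k * d)) as [Hlt|Hge].
      + exists B1. intros t Ht _. apply HB1; auto. lra.
      + assert (Hc : 0 <= INR k * d <= T).
        { split; [|lra]. apply Rmult_le_pos; [apply pos_INR|apply Rlt_le, cond_pos]. }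
        specialize (Hd _ Hc).
        apply NNPP. intros Hn. apply Hd. intros (t' & Ht' & Hct' & Hdt').
        apply Hn. destruct (Hdel t' Ht') as (B2 & HB2).
        exists (Rmax B1 B2). intros t Ht Htk. rewrite S_INR in Htk.
        destruct (Rle_dec t (INR k * d)) as [Hle|Hgt].
        * apply Hmono with B1; [apply Rmax_l|]. apply HB1; auto.
        * apply Hmono with B2; [apply Rmax_r|]. apply HB2; auto.
          simpl in Hct', Hdt'.
          unfold Rabs in *; repeat destruct Rcase_abs; lra. }
  destruct (archimed (T / d)) as [H1 _].
  assert (Hpos : 0 < T / d) by (apply Rdiv_lt_0_compat; [lra| apply cond_pos]).
  destruct (Hk (Z.to_nat (up (T/d)))) as (B & HB). exists B. intros t Ht.
  apply HB; auto. rewrite INR_IZR_INZ, Z2Nat.id.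
  - assert (T <= IZR (up (T/d)) * d); [|lra].
    assert (Hd0 := cond_pos d).
    apply Rmult_lt_compat_r with (r:=d) in H1; [|auto].
    unfold Rdiv in H1. rewrite Rmult_assoc, Rinv_l in H1; lra.
  - apply le_IZR. lra.
Qed.

Lemma isd_mult (f g : R -> R) x df dg : is_derive f x df -> is_derive g x dg ->
  is_derive (fun y => f y * g y) x (df * g x + f x * dg).
Proof. intros H1 H2. exact (is_derive_mult f g x df dg H1 H2 Rmult_comm). Qed.
Lemma isd_plus (f g : R -> R) x df dg : is_derive f x df -> is_derive g x dg ->
  is_derive (fun y => f y + g y) x (df + dg).
Proof. intros H1 H2. exact (is_derive_plus f g x df dg H1 H2). Qed.
Lemma isd_comp (f g : R -> R) x df dg : is_derive f (g x) df -> is_derive g x dg ->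
  is_derive (fun y => f (g y)) x (df * dg).
Proof. intros H1 H2. rewrite Rmult_comm. exact (is_derive_comp f g x df dg H1 H2). Qed.
Lemma isd_const (c x : R) : is_derive (fun _ => c) x 0.
Proof. exact (is_derive_const c x). Qed.
Lemma isd_id (x : R) : is_derive (fun y => y) x 1.
Proof. exact (is_derive_id x). Qed.
Lemma isd_eq (f : R -> R) x l l' : is_derive f x l -> l = l' -> is_derive f x l'.
Proof. intros H ->; exact H. Qed.
Lemma cont_mult (f g : R -> R) x : continuous f x -> continuous g x ->
  continuous (fun y => f y * g y) x.
Proof. intros H1 H2. exact (continuous_mult f g x H1 H2). Qed.
Lemma cont_plus (f g : R -> R) x : continuous f x -> continuous g x ->
  continuous (fun y => f y + g y) x.
Proof. intros H1 H2. exact (continuous_plus f g x H1 H2). Qed.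

Section GS.
Variables (M T : R) (HM : 0 < M) (HT : 0 < T).

Definition It t := 0 <= t <= T.

Definition G0 (u : R -> R -> R) : Prop :=
  (forall t, It t -> forall x, u (x+M) t = u x t) /\
  (forall t, It t -> forall x, continuous (fun y => u y t) x) /\
  (forall t0, It t0 -> forall eps, 0 < eps -> exists delta, 0 < delta /\
     forall t, It t -> Rabs (t - t0) < delta -> forall x, Rabs (u x t - u x t0) <= eps).

Fixpoint G (k : nat) (u : R -> R -> R) : Prop :=
  match k with
  | O => G0 u
  | S k => G0 u /\ exists ux, (forall t, It t -> forall x, is_derive (fun y => u y t) x (ux x t))
                 /\ G k ux
  end.

Lemma G0_bound u : G0 u -> exists B, forall t, It t -> forall x, Rabs (u x t) <= B.
Proof.
  intros (Hp & Hc & Hu).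
  apply (compact_glob T (fun t B => forall x, Rabs (u x t) <= B) HT).
  - intros t B B' HB H x. specialize (H x). lra.
  - intros t0 Ht0. destruct (slice_bound M (fun y => u y t0) HM (Hp t0 Ht0) (Hc t0 Ht0))
      as (B0 & HB0).
    destruct (Hu t0 Ht0 1 Rlt_0_1) as (d & Hd & Hd').
    exists d; split; auto. exists (B0 + 1). intros t Ht Htt x.
    specialize (Hd' t Ht Htt x). specialize (HB0 x).
    unfold Rabs in *; repeat destruct Rcase_abs; lra.
Qed.

Lemma G0_bound_pos u : G0 u -> exists B, 0 < B /\ forall t, It t -> forall x, Rabs (u x t) <= B.
Proof.
  intros H. destruct (G0_bound u H) as (B & HB). exists (Rabs B + 1). split.
  - pose proof (Rabs_pos B); lra.
  - intros t Ht x. specialize (HB t Ht x). pose proof (Rle_abs B); lra.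
Qed.

Lemma G0_ext u v : (forall x t, It t -> u x t = v x t) -> G0 u -> G0 v.
Proof.
  intros He (Hp & Hc & Hu). split; [|split].
  - intros t Ht x. rewrite <- !He by auto. auto.
  - intros t Ht x. apply (continuous_ext (fun y => u y t)); [|auto].
    intros y. apply He; auto.
  - intros t0 Ht0 eps Heps. destruct (Hu t0 Ht0 eps Heps) as (d & Hd & Hd').
    exists d; split; auto. intros t Ht Htt x. rewrite <- !He by auto. auto.
Qed.

Lemma G0_plus u v : G0 u -> G0 v -> G0 (fun x t => u x t + v x t).
Proof.
  intros (Hp & Hc & Hu) (Hp' & Hc' & Hu'). split; [|split].
  - intros t Ht x. rewrite Hp, Hp'; auto.
  - intros t Ht x. apply cont_plus; auto.
  - intros t0 Ht0 eps Heps. destruct (Hu t0 Ht0 (eps/2) ltac:(lra)) as (d & Hd & Hd').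
    destruct (Hu' t0 Ht0 (eps/2) ltac:(lra)) as (d' & Hd2 & Hd2').
    exists (Rmin d d'); split; [apply Rmin_pos; auto|].
    intros t Ht Htt x. specialize (Hd' t Ht ltac:(pose proof (Rmin_l d d'); lra) x).
    specialize (Hd2' t Ht ltac:(pose proof (Rmin_r d d'); lra) x).
    replace (u x t + v x t - (u x t0 + v x t0)) with ((u x t - u x t0) + (v x t - v x t0)) by ring.
    pose proof (Rabs_triang (u x t - u x t0) (v x t - v x t0)); lra.
Qed.

Lemma G0_mult u v : G0 u -> G0 v -> G0 (fun x t => u x t * v x t).
Proof.
  intros Gu Gv.
  destruct (G0_bound_pos u Gu) as (Bu & HBu & HBu').
  destruct (G0_bound_pos v Gv) as (Bv & HBv & HBv').
  destruct Gu as (Hp & Hc & Hu). destruct Gv as (Hp' & Hc' & Hu'). split; [|split].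
  - intros t Ht x. rewrite Hp, Hp'; auto.
  - intros t Ht x. apply cont_mult; auto.
  - intros t0 Ht0 eps Heps.
    set (e := eps / (Bu + Bv)).
    assert (He : 0 < e) by (apply Rdiv_lt_0_compat; lra).
    destruct (Hu t0 Ht0 e He) as (d & Hd & Hd').
    destruct (Hu' t0 Ht0 e He) as (d' & Hd2 & Hd2').
    exists (Rmin d d'); split; [apply Rmin_pos; auto|].
    intros t Ht Htt x. specialize (Hd' t Ht ltac:(pose proof (Rmin_l d d'); lra) x).
    specialize (Hd2' t Ht ltac:(pose proof (Rmin_r d d'); lra) x).
    replace (u x t * v x t - u x t0 * v x t0) with
       (u x t * (v x t - v x t0) + v x t0 * (u x t - u x t0)) by ring.
    eapply Rle_trans; [apply Rabs_triang|]. rewrite !Rabs_mult.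
    assert (E : eps = Bu * e + Bv * e) by (unfold e; field; lra).
    rewrite E.
    apply Rplus_le_compat; apply Rmult_le_compat; try apply Rabs_pos; auto.
Qed.

Lemma G0_tfun (c : R -> R) :
  (forall t0, It t0 -> forall eps, 0 < eps -> exists delta, 0 < delta /\
     forall t, It t -> Rabs (t - t0) < delta -> Rabs (c t - c t0) <= eps) ->
  G0 (fun _ t => c t).
Proof.
  intros Hc. split; [|split].
  - intros; auto.
  - intros; apply continuous_const.
  - intros t0 Ht0 eps Heps. destruct (Hc t0 Ht0 eps Heps) as (d & Hd & Hd').
    exists d; split; auto.
Qed.

Lemma G0_const c : G0 (fun _ _ => c).
Proof.
  apply (G0_tfun (fun _ => c)). intros t0 _ eps Heps. exists 1; split; [lra|].
  intros. rewrite Rminus_diag, Rabs_R0; lra.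
Qed.

Lemma G0_comp (phi : R -> R) c u : (forall y, c <= y -> continuity_pt phi y) ->
  G0 u -> (forall t, It t -> forall x, c <= u x t) -> G0 (fun x t => phi (u x t)).
Proof.
  intros Hphi Gu Hlow.
  destruct (G0_bound u Gu) as (B & HB).
  destruct Gu as (Hp & Hc & Hu). split; [|split].
  - intros t Ht x. rewrite Hp; auto.
  - intros t Ht x. apply (continuous_comp (fun y => u y t) phi); auto.
    apply continuity_pt_filterlim. apply Hphi. auto.
  - intros t0 Ht0 eps Heps.
    assert (Huc := Heine phi (fun y => c <= y <= B) (compact_P3 c B)
      ltac:(intros y Hy; apply Hphi; apply Hy)).
    destruct (Huc (mkposreal eps Heps)) as (dl & Hdl).
    destruct (Hu t0 Ht0 (dl/2) ltac:(pose proof (cond_pos dl); lra)) as (d & Hd & Hd').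
    exists d; split; auto. intros t Ht Htt x.
    apply Rlt_le. apply (Hdl (u x t) (u x t0)).
    + split; auto. specialize (HB t Ht x). pose proof (Rle_abs (u x t)); lra.
    + split; auto. specialize (HB t0 Ht0 x). pose proof (Rle_abs (u x t0)); lra.
    + specialize (Hd' t Ht Htt x). pose proof (cond_pos dl); lra.
Qed.


Lemma isd_contpt (phi : R -> R) y l : is_derive phi y l -> continuity_pt phi y.
Proof.
  intros H. apply is_derive_Reals in H. apply derivable_continuous_pt. exists l; exact H.
Qed.

Lemma G_G0 k u : G k u -> G0 u.
Proof. destruct k; simpl; tauto. Qed.

Lemma G_mono k : forall u, G (S k) u -> G k u.
Proof.
  induction k as [|k IH]; intros u H.
  - apply H.
  - destruct H as (H0 & ux & Hd & Hk). split; auto. exists ux; split; auto.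
Qed.

Lemma G_mono_le k m u : (k <= m)%nat -> G m u -> G k u.
Proof.
  intros Hle; induction Hle; auto. intros H. apply IHHle. apply G_mono; auto.
Qed.

Lemma G_ext k : forall u v, (forall x t, It t -> u x t = v x t) -> G k u -> G k v.
Proof.
  destruct k as [|k]; intros u v He H.
  - eapply G0_ext; eauto.
  - destruct H as (H0 & ux & Hd & Hk). split; [eapply G0_ext; eauto|].
    exists ux; split; auto. intros t Ht x.
    apply (is_derive_ext (fun y => u y t)); [intros y; apply He; auto|auto].
Qed.

Lemma G_plus k : forall u v, G k u -> G k v -> G k (fun x t => u x t + v x t).
Proof.
  induction k as [|k IH]; intros u v Hu Hv.
  - apply G0_plus; auto.
  - destruct Hu as (H0 & ux & Hd & Hk). destruct Hv as (H0' & vx & Hd' & Hk').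
    split; [apply G0_plus; auto|]. exists (fun x t => ux x t + vx x t). split.
    + intros t Ht x. apply (isd_plus (fun y => u y t) (fun y => v y t)); auto.
    + apply IH; auto.
Qed.

Lemma G_mult k : forall u v, G k u -> G k v -> G k (fun x t => u x t * v x t).
Proof.
  induction k as [|k IH]; intros u v Hu Hv.
  - apply G0_mult; auto.
  - assert (Hu' := G_mono _ _ Hu). assert (Hv' := G_mono _ _ Hv).
    destruct Hu as (H0 & ux & Hd & Hk). destruct Hv as (H0' & vx & Hd' & Hk').
    split; [apply G0_mult; auto|].
    exists (fun x t => ux x t * v x t + u x t * vx x t). split.
    + intros t Ht x. apply (isd_mult (fun y => u y t) (fun y => v y t)); auto.
    + apply G_plus; apply IH; auto.
Qed.

Lemma G_tfun k : forall (c : R -> R),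
  (forall t0, It t0 -> forall eps, 0 < eps -> exists delta, 0 < delta /\
     forall t, It t -> Rabs (t - t0) < delta -> Rabs (c t - c t0) <= eps) ->
  G k (fun _ t => c t).
Proof.
  induction k as [|k IH]; intros c Hc.
  - apply G0_tfun; auto.
  - split; [apply G0_tfun; auto|]. exists (fun _ _ => 0). split.
    + intros t Ht x. apply isd_const.
    + apply (IH (fun _ => 0)). intros t0 _ eps Heps. exists 1; split; [lra|].
      intros. rewrite Rminus_diag, Rabs_R0; lra.
Qed.

Lemma G_const k c : G k (fun _ _ => c).
Proof.
  apply (G_tfun k (fun _ => c)). intros t0 _ eps Heps. exists 1; split; [lra|].
  intros. rewrite Rminus_diag, Rabs_R0; lra.
Qed.

Lemma G_scal k c u : G k u -> G k (fun x t => c * u x t).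
Proof. intros H. apply (G_mult k (fun _ _ => c)); auto. apply G_const. Qed.

Lemma G_opp k u : G k u -> G k (fun x t => - u x t).
Proof.
  intros H. apply (G_ext k (fun x t => -1 * u x t)); [intros; ring|]. apply G_scal; auto.
Qed.

Lemma G_inv k : forall u c, 0 < c -> (forall t, It t -> forall x, c <= u x t) ->
  G k u -> G k (fun x t => / u x t).
Proof.
  induction k as [|k IH]; intros u c Hc Hl Hu.
  - apply (G0_comp Rinv c); auto. intros y Hy.
    apply (isd_contpt _ _ _ (is_derive_inv (fun x => x) y 1 (is_derive_id y) ltac:(simpl; lra))).
  - assert (Hu' := G_mono _ _ Hu).
    destruct Hu as (H0 & ux & Hd & Hk). split.
    + apply (G0_comp Rinv c); auto. intros y Hy.
      apply (isd_contpt _ _ _ (is_derive_inv (fun x => x) y 1 (is_derive_id y) ltac:(simpl; lra))).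
    + exists (fun x t => - ux x t * (/ u x t * / u x t)). split.
      * intros t Ht x. specialize (Hl t Ht x).
        eapply isd_eq; [apply (is_derive_inv (fun y => u y t)); [apply Hd; auto| lra]|].
        simpl. field. lra.
      * apply G_mult; [apply G_opp; auto|]. apply G_mult; eapply IH; eauto.
Qed.

Lemma G_ln k : forall u c, 0 < c -> (forall t, It t -> forall x, c <= u x t) ->
  G k u -> G k (fun x t => ln (u x t)).
Proof.
  intros u c Hc Hl Hu. destruct k as [|k].
  - apply (G0_comp ln c); auto. intros y Hy. apply (isd_contpt _ _ _ (is_derive_ln y ltac:(lra))).
  - assert (Hu' := G_mono _ _ Hu).
    destruct Hu as (H0 & ux & Hd & Hk). split.
    + apply (G0_comp ln c); auto. intros y Hy. apply (isd_contpt _ _ _ (is_derive_ln y ltac:(lra))).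
    + exists (fun x t => / u x t * ux x t). split.
      * intros t Ht x. specialize (Hl t Ht x). apply (isd_comp ln (fun y => u y t)); [apply is_derive_ln; lra|apply Hd; auto].
      * apply G_mult; auto. eapply G_inv; eauto.
Qed.

Lemma G_exp k : forall u, G k u -> G k (fun x t => exp (u x t)).
Proof.
  induction k as [|k IH]; intros u Hu.
  - destruct (G0_bound u Hu) as (B & HB).
    apply (G0_comp exp (-B)); auto.
    + intros y _. apply (isd_contpt _ _ _ (is_derive_exp y)).
    + intros t Ht x. specialize (HB t Ht x). pose proof (Rle_abs (- u x t)). rewrite Rabs_Ropp in H. lra.
  - assert (Hu' := G_mono _ _ Hu).
    split; [apply (G_G0 k); apply IH; auto|].
    destruct Hu as (H0 & ux & Hd & Hk).
    exists (fun x t => exp (u x t) * ux x t). split.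
    + intros t Ht x. apply (isd_comp exp (fun y => u y t)); [apply is_derive_exp|apply Hd; auto].
    + apply G_mult; auto.
Qed.

Lemma isd_opp (f : R -> R) x l : is_derive f x l -> is_derive (fun y => - f y) x (- l).
Proof. intros H. exact (is_derive_opp f x l H). Qed.
Lemma isd_cont (f : R -> R) x l : is_derive f x l -> continuous f x.
Proof. intros H. apply continuity_pt_filterlim. eapply isd_contpt; eauto. Qed.

Lemma RInt_minus' (f g : R -> R) a b : ex_RInt f a b -> ex_RInt g a b ->
  RInt (fun x => f x - g x) a b = RInt f a b - RInt g a b.
Proof. intros H1 H2. exact (RInt_minus f g a b H1 H2). Qed.

Lemma RInt_abs_bound (f : R -> R) x K : (forall a b, ex_RInt f a b) ->
  (forall y, Rabs (f y) <= K) -> Rabs (RInt f 0 x) <= Rabs x * K.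
Proof.
  intros He Hb. destruct (Rle_dec 0 x) as [Hx|Hx].
  - rewrite (Rabs_pos_eq x) by lra. replace (x * K) with ((x - 0) * K) by ring.
    apply abs_RInt_le_const; auto.
  - rewrite <- (opp_RInt_swap f x 0) by auto.
    change (Rabs (- RInt f x 0) <= Rabs x * K). rewrite Rabs_Ropp.
    rewrite (Rabs_left x) by lra. replace (- x * K) with ((0 - x) * K) by ring.
    apply abs_RInt_le_const; auto; lra.
Qed.

Lemma exR h t a b : G0 h -> It t -> ex_RInt (fun y => h y t) a b.
Proof. intros (_ & Hc & _) Ht. apply (ex_RInt_continuous (V:=R_CompleteNormedModule)). intros; apply Hc; auto. Qed.

Lemma isd_int h t x : G0 h -> It t ->
  is_derive (fun z => RInt (fun y => h y t) 0 z) x (h x t).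
Proof.
  intros Gh Ht. apply (is_derive_RInt (fun y => h y t) (fun z => RInt (fun y => h y t) 0 z) 0 x).
  - apply filter_forall. intros z. apply (RInt_correct (V:=R_CompleteNormedModule)). apply exR; auto.
  - destruct Gh as (_ & Hc & _). apply Hc; auto.
Qed.

Lemma int_per h t : G0 h -> It t -> RInt (fun y => h y t) 0 M = 0 ->
  forall x, RInt (fun y => h y t) 0 (x + M) = RInt (fun y => h y t) 0 x.
Proof.
  intros Gh Ht H0 x.
  set (D := fun z => RInt (fun y => h y t) 0 (z + M) - RInt (fun y => h y t) 0 z).
  assert (HD : forall z, is_derive D z 0).
  { intros z. unfold D.
    eapply isd_eq.
    - apply (isd_plus (fun z => RInt (fun y => h y t) 0 (z + M))
                      (fun z => - RInt (fun y => h y t) 0 z)).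
      + apply (isd_comp (fun z => RInt (fun y => h y t) 0 z) (fun z => z + M)).
        * apply isd_int; auto.
        * eapply isd_eq; [apply (isd_plus (fun z => z) (fun _ => M)); [apply isd_id|apply isd_const]|].
          simpl. reflexivity.
      + apply isd_opp. apply isd_int; auto.
    - destruct Gh as (Hp & _). rewrite Hp by auto. simpl. ring. }
  destruct (MVT_gen D 0 x (fun _ => 0)) as (c & _ & Hc).
  - intros; auto.
  - intros; eapply isd_contpt; eauto.
  - assert (D x = D 0) by lra. unfold D in H. rewrite Rplus_0_l in H.
    rewrite RInt_point in H. rewrite H0 in H. change (zero : R) with 0 in H. lra.
Qed.

Lemma int_diff h t t0 x K : G0 h -> It t -> It t0 -> (forall y, Rabs (h y t - h y t0) <= K) ->
  Rabs (RInt (fun y => h y t) 0 x - RInt (fun y => h y t0) 0 x) <= Rabs x * K.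
Proof.
  intros Gh Ht Ht0 HK. rewrite <- RInt_minus' by (apply exR; auto).
  apply RInt_abs_bound; auto. intros a b.
  apply (ex_RInt_minus (V:=R_NormedModule) (fun y => h y t) (fun y => h y t0)); apply exR; auto.
Qed.

Lemma int_tcont h x : G0 h -> forall t0, It t0 -> forall eps, 0 < eps -> exists delta, 0 < delta /\
     forall t, It t -> Rabs (t - t0) < delta ->
       Rabs (RInt (fun y => h y t) 0 x - RInt (fun y => h y t0) 0 x) <= eps.
Proof.
  intros Gh t0 Ht0 eps Heps. assert (Gh' := Gh). destruct Gh' as (_ & _ & Hu).
  set (e := eps / (Rabs x + 1)).
  assert (He : 0 < e) by (apply Rdiv_lt_0_compat; pose proof (Rabs_pos x); lra).
  destruct (Hu t0 Ht0 e He) as (d & Hd & Hd'). exists d; split; auto.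
  intros t Ht Htt. eapply Rle_trans; [apply (int_diff h t t0 x e); auto|].
  assert (E : eps = (Rabs x + 1) * e) by (unfold e; field; pose proof (Rabs_pos x); lra).
  rewrite E. apply Rmult_le_compat_r; lra.
Qed.

Lemma G_int k h : G k h -> (forall t, It t -> RInt (fun y => h y t) 0 M = 0) ->
  G (S k) (fun x t => RInt (fun y => h y t) 0 x).
Proof.
  intros Gk H0. assert (Gh := G_G0 k h Gk). split; [split; [|split]|].
  - intros t Ht x. apply int_per; auto.
  - intros t Ht x. eapply isd_cont. apply isd_int; auto.
  - intros t0 Ht0 eps Heps. assert (Gh' := Gh). destruct Gh' as (_ & _ & Hu).
    destruct (Hu t0 Ht0 (eps / M) ltac:(apply Rdiv_lt_0_compat; lra)) as (d & Hd & Hd').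
    exists d; split; auto. intros t Ht Htt x.
    destruct (per_reduce M HM x) as (y & n & Hy & Hx).
    assert (Eq : forall s, It s -> RInt (fun z => h z s) 0 x = RInt (fun z => h z s) 0 y).
    { intros s Hs. destruct Hx as [-> | ->];
      apply (per_shift M (fun x => RInt (fun z => h z s) 0 x)); intros; apply int_per; auto. }
    rewrite !Eq by auto.
    eapply Rle_trans; [apply (int_diff h t t0 y (eps/M)); auto|].
    rewrite Rabs_pos_eq by lra.
    apply Rle_trans with (M * (eps / M)); [apply Rmult_le_compat_r; [|lra]|right; field; lra].
    apply Rlt_le, Rdiv_lt_0_compat; lra.
  - exists h. split; auto. intros t Ht x. apply isd_int; auto.
Qed.

Lemma Dn_S (f : R -> R) j x : Derive_n f (S j) x = Derive_n (Derive f) j x.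
Proof.
  replace (S j) with (j + 1)%nat by lia. rewrite <- Derive_n_comp. reflexivity.
Qed.

Lemma Dn_S_fun (f : R -> R) j : Derive_n f (S j) = Derive_n (Derive f) j.
Proof. apply functional_extensionality; intros; apply Dn_S. Qed.

Lemma exDn (f : R -> R) j x : ex_derive_n f (S (S j)) x <-> ex_derive_n (Derive f) (S j) x.
Proof. simpl. rewrite <- Dn_S_fun. reflexivity. Qed.

Lemma Derive_per (f : R -> R) : (forall x, f (x+M) = f x) ->
  forall j x, Derive_n f j (x+M) = Derive_n f j x.
Proof.
  intros Hp j x. rewrite <- Derive_n_comp_trans. apply Derive_n_ext. auto.
Qed.

Lemma G_CtCk k : forall u, G k u -> CtCk M T k u.
Proof.
  induction k as [|k IH]; intros u H.
  - destruct H as (Hp & Hc & Hu). split.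
    + intros t Ht. split; [|split].
      * intros x; apply Hp; auto.
      * intros j Hj x. replace j with 0%nat by lia. simpl; auto.
      * intros x. apply Hc; auto.
    + intros j Hj. replace j with 0%nat by lia. apply Hu.
  - destruct H as (G0u & ux & Hd & Hk). destruct (IH ux Hk) as (Hs & Hcu).
    destruct G0u as (Hp & Hc & Hu).
    assert (Hder : forall t, It t -> Derive (fun y => u y t) = (fun y => ux y t)).
    { intros t Ht. apply functional_extensionality; intros y. apply is_derive_unique. apply Hd; auto. }
    assert (Key : forall t, It t -> forall j x,
       Derive_n (fun y => u y t) (S j) x = Derive_n (fun y => ux y t) j x).
    { intros t Ht j x. rewrite Dn_S, Hder; auto. }
    split.
    + intros t Ht. split; [|split].
      * intros x; apply Hp; auto.
      * intros j Hj x. destruct j as [|j]; [simpl; auto|].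
        destruct j as [|j].
        -- simpl. exists (ux x t). apply Hd; auto.
        -- apply exDn. rewrite Hder by auto. apply (Hs t Ht). lia.
      * intros x. rewrite Dn_S_fun, Hder by auto. apply (Hs t Ht).
    + intros j Hj t0 Ht0 eps Heps. destruct j as [|j].
      * apply Hu; auto.
      * destruct (Hcu j ltac:(lia) t0 Ht0 eps Heps) as (d & Hd0 & Hd').
        exists d; split; auto. intros t Ht Htt x. rewrite !Key by auto. apply Hd'; auto.
Qed.

Lemma CtCk_G k : forall u, CtCk M T k u -> G k u.
Proof.
  induction k as [|k IH]; intros u (Hs & Hcu).
  - split; [|split].
    + intros t Ht x. apply (Hs t Ht).
    + intros t Ht x. apply (Hs t Ht).
    + intros t0 Ht0 eps Heps. apply (Hcu 0%nat ltac:(lia) t0 Ht0 eps Heps).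
  - assert (Hex : forall t, It t -> forall x, is_derive (fun y => u y t) x (Derive (fun y => u y t) x)).
    { intros t Ht x. apply Derive_correct. destruct (Hs t Ht) as (_ & He & _).
      apply (He 1%nat ltac:(lia) x). }
    split; [split; [|split]|].
    + intros t Ht x. apply (Hs t Ht).
    + intros t Ht x. eapply isd_cont. apply Hex; auto.
    + intros t0 Ht0 eps Heps. apply (Hcu 0%nat ltac:(lia) t0 Ht0 eps Heps).
    + exists (fun x t => Derive (fun y => u y t) x). split; [exact Hex|].
      apply IH. split.
      * intros t Ht. destruct (Hs t Ht) as (Hp & He & Hc). split; [|split].
        -- intros x. apply (Derive_per (fun y => u y t) Hp 1%nat x).
        -- intros j Hj x. destruct j as [|j]; [simpl; auto|].
           apply (proj1 (exDn (fun y => u y t) j x)). apply He. lia.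
        -- intros x. rewrite <- Dn_S_fun. apply Hc.
      * intros j Hj t0 Ht0 eps Heps.
        destruct (Hcu (S j) ltac:(lia) t0 Ht0 eps Heps) as (d & Hd0 & Hd').
        exists d; split; auto. intros t Ht Htt x. rewrite <- !Dn_S. apply Hd'; auto.
Qed.

Definition TD (u ut : R -> R -> R) : Prop :=
  forall x t, It t -> forall eps, 0 < eps -> exists delta, 0 < delta /\
    forall s, It s -> Rabs (s - t) < delta ->
      Rabs (u x s - u x t - ut x t * (s - t)) <= eps * Rabs (s - t).

Lemma tderiv_TD u ut : tderiv T u ut -> TD u ut.
Proof.
  intros H x t Ht eps Heps. destruct (H x t Ht eps Heps) as (d & Hd & Hd').
  exists d; split; auto. intros s Hs Hst.
  destruct (Req_dec s t) as [->|Hne].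
  - replace (u x t - u x t - ut x t * (t - t)) with 0 by ring.
    rewrite Rabs_R0, Rminus_diag, Rabs_R0. lra.
  - assert (Hne' : s - t <> 0) by lra.
    replace (u x s - u x t - ut x t * (s - t)) with
      (((u x s - u x t) / (s - t) - ut x t) * (s - t)) by (field; auto).
    rewrite Rabs_mult. apply Rmult_le_compat_r; [apply Rabs_pos|].
    apply Hd'; auto. split; auto. apply Rabs_pos_lt; auto.
Qed.

Lemma TD_tderiv u ut : TD u ut -> tderiv T u ut.
Proof.
  intros H x t Ht eps Heps. destruct (H x t Ht eps Heps) as (d & Hd & Hd').
  exists d; split; auto. intros s Hs (Hst1 & Hst2).
  assert (Hne' : s - t <> 0) by (intros E; rewrite E, Rabs_R0 in Hst1; lra).
  replace ((u x s - u x t) / (s - t) - ut x t) with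
    ((u x s - u x t - ut x t * (s - t)) / (s - t)) by (field; auto).
  unfold Rdiv. rewrite Rabs_mult, Rabs_inv.
  specialize (Hd' s Hs Hst2).
  apply Rmult_le_reg_r with (Rabs (s - t)); auto.
  rewrite Rmult_assoc, Rinv_l by lra. lra.
Qed.

Lemma TD_lip u ut x t : TD u ut -> It t -> exists delta, 0 < delta /\ forall s, It s ->
  Rabs (s - t) < delta -> Rabs (u x s - u x t) <= (Rabs (ut x t) + 1) * Rabs (s - t).
Proof.
  intros H Ht. destruct (H x t Ht 1 Rlt_0_1) as (d & Hd & Hd'). exists d; split; auto.
  intros s Hs Hst. specialize (Hd' s Hs Hst).
  replace (u x s - u x t) with ((u x s - u x t - ut x t * (s - t)) + ut x t * (s - t)) by ring.
  eapply Rle_trans; [apply Rabs_triang|]. rewrite Rabs_mult. lra.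
Qed.

Lemma TD_cont u ut x t : TD u ut -> It t -> forall eps, 0 < eps -> exists delta, 0 < delta /\
  forall s, It s -> Rabs (s - t) < delta -> Rabs (u x s - u x t) <= eps.
Proof.
  intros H Ht eps Heps. destruct (TD_lip u ut x t H Ht) as (d & Hd & Hd').
  set (K := Rabs (ut x t) + 1). assert (HK : 0 < K) by (unfold K; pose proof (Rabs_pos (ut x t)); lra).
  exists (Rmin d (eps / K)). split; [apply Rmin_pos; auto; apply Rdiv_lt_0_compat; auto|].
  intros s Hs Hst. eapply Rle_trans; [apply Hd'; auto; pose proof (Rmin_l d (eps/K)); lra|].
  fold K. assert (Rabs (s - t) <= eps / K) by (pose proof (Rmin_r d (eps/K)); lra).
  apply Rmult_le_compat_l with (r := K) in H0; [|lra].
  replace (K * (eps / K)) with eps in H0 by (field; lra). lra.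
Qed.

Lemma TD_ext u ut v vt : (forall x t, It t -> u x t = v x t) ->
  (forall x t, It t -> ut x t = vt x t) -> TD u ut -> TD v vt.
Proof.
  intros E1 E2 H x t Ht eps Heps. destruct (H x t Ht eps Heps) as (d & Hd & Hd').
  exists d; split; auto. intros s Hs Hst. rewrite <- !E1, <- E2 by auto. auto.
Qed.

Lemma TD_plus u ut v vt : TD u ut -> TD v vt ->
  TD (fun x t => u x t + v x t) (fun x t => ut x t + vt x t).
Proof.
  intros H1 H2 x t Ht eps Heps.
  destruct (H1 x t Ht (eps/2) ltac:(lra)) as (d1 & Hd1 & Hd1').
  destruct (H2 x t Ht (eps/2) ltac:(lra)) as (d2 & Hd2 & Hd2').
  exists (Rmin d1 d2); split; [apply Rmin_pos; auto|]. intros s Hs Hst.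
  specialize (Hd1' s Hs ltac:(pose proof (Rmin_l d1 d2); lra)).
  specialize (Hd2' s Hs ltac:(pose proof (Rmin_r d1 d2); lra)).
  replace (u x s + v x s - (u x t + v x t) - (ut x t + vt x t) * (s - t)) with
    ((u x s - u x t - ut x t * (s - t)) + (v x s - v x t - vt x t * (s - t))) by ring.
  eapply Rle_trans; [apply Rabs_triang|]. lra.
Qed.

Lemma TD_mult u ut v vt : TD u ut -> TD v vt ->
  TD (fun x t => u x t * v x t) (fun x t => ut x t * v x t + u x t * vt x t).
Proof.
  intros H1 H2 x t Ht eps Heps.
  set (A := Rabs (v x t) + 1). set (Bc := Rabs (ut x t) + 1). set (C := Rabs (u x t) + 1).
  assert (HA : 0 < A) by (unfold A; pose proof (Rabs_pos (v x t)); lra).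
  assert (HB : 0 < Bc) by (unfold Bc; pose proof (Rabs_pos (ut x t)); lra).
  assert (HC : 0 < C) by (unfold C; pose proof (Rabs_pos (u x t)); lra).
  assert (He1 : 0 < eps / (3 * A)) by (apply Rdiv_lt_0_compat; lra).
  assert (He2 : 0 < Rmin 1 (eps / (3 * Bc))) by (apply Rmin_pos; [lra|apply Rdiv_lt_0_compat; lra]).
  assert (He3 : 0 < eps / (3 * C)) by (apply Rdiv_lt_0_compat; lra).
  destruct (H1 x t Ht _ He1) as (d1 & Hd1 & Hd1').
  destruct (TD_cont v vt x t H2 Ht _ He2) as (d2 & Hd2 & Hd2').
  destruct (H2 x t Ht _ He3) as (d3 & Hd3 & Hd3').
  exists (Rmin d1 (Rmin d2 d3)). split; [repeat apply Rmin_pos; auto|]. intros s Hs Hst.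
  pose proof (Rmin_l d1 (Rmin d2 d3)). pose proof (Rmin_r d1 (Rmin d2 d3)).
  pose proof (Rmin_l d2 d3). pose proof (Rmin_r d2 d3).
  specialize (Hd1' s Hs ltac:(lra)). specialize (Hd2' s Hs ltac:(lra)). specialize (Hd3' s Hs ltac:(lra)).
  set (d := Rabs (s - t)). assert (Hd0 : 0 <= d) by apply Rabs_pos.
  set (X1 := u x s - u x t - ut x t * (s - t)) in *.
  set (X3 := v x s - v x t - vt x t * (s - t)) in *.
  replace (u x s * v x s - u x t * v x t - (ut x t * v x t + u x t * vt x t) * (s - t)) with
    (X1 * v x s + ut x t * (s - t) * (v x s - v x t) + u x t * X3) by (unfold X1, X3; ring).
  assert (T1 : Rabs (X1 * v x s) <= eps / 3 * d).
  { rewrite Rabs_mult. assert (Rabs (v x s) <= A).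
    { unfold A. pose proof (Rmin_l 1 (eps / (3 * Bc))).
      replace (v x s) with ((v x s - v x t) + v x t) by ring.
      pose proof (Rabs_triang (v x s - v x t) (v x t)). lra. }
    apply Rle_trans with ((eps / (3 * A) * d) * A).
    - apply Rmult_le_compat; auto; apply Rabs_pos.
    - right. field. lra. }
  assert (T2 : Rabs (ut x t * (s - t) * (v x s - v x t)) <= eps / 3 * d).
  { rewrite !Rabs_mult. fold d. pose proof (Rmin_r 1 (eps / (3 * Bc))).
    apply Rle_trans with (Bc * d * (eps / (3 * Bc))).
    - apply Rmult_le_compat; try apply Rmult_le_pos; try apply Rabs_pos; try lra.
      apply Rmult_le_compat_r; auto. unfold Bc; lra.
    - right. field. lra. }
  assert (T3 : Rabs (u x t * X3) <= eps / 3 * d).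
  { rewrite Rabs_mult. apply Rle_trans with (C * (eps / (3 * C) * d)).
    - apply Rmult_le_compat; try apply Rabs_pos; auto. unfold C; lra.
    - right. field. lra. }
  eapply Rle_trans; [apply Rabs_triang|].
  eapply Rle_trans; [apply Rplus_le_compat_r; apply Rabs_triang|]. lra.
Qed.

Lemma isd_lin (phi : R -> R) y l : is_derive phi y l -> forall eps, 0 < eps ->
  exists eta, 0 < eta /\ forall z, Rabs (z - y) < eta ->
    Rabs (phi z - phi y - l * (z - y)) <= eps * Rabs (z - y).
Proof.
  intros H eps Heps. apply is_derive_Reals in H.
  destruct (H eps Heps) as (d & Hd). exists d; split; [apply cond_pos|].
  intros z Hz. destruct (Req_dec z y) as [->|Hne].
  - replace (phi y - phi y - l * (y - y)) with 0 by ring. rewrite Rminus_diag, Rabs_R0. lra.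
  - assert (Hh : z - y <> 0) by lra. specialize (Hd (z - y) Hh Hz).
    replace (y + (z - y)) with z in Hd by ring.
    replace (phi z - phi y - l * (z - y)) with (((phi z - phi y) / (z - y) - l) * (z - y))
      by (field; auto).
    rewrite Rabs_mult. apply Rmult_le_compat_r; [apply Rabs_pos|lra].
Qed.

Lemma TD_comp (phi phi' : R -> R) u ut :
  (forall x t, It t -> is_derive phi (u x t) (phi' (u x t))) -> TD u ut ->
  TD (fun x t => phi (u x t)) (fun x t => phi' (u x t) * ut x t).
Proof.
  intros Hphi H x t Ht eps Heps.
  set (l := phi' (u x t)). set (K := Rabs (ut x t) + 1). set (L := Rabs l + 1).
  assert (HK : 0 < K) by (unfold K; pose proof (Rabs_pos (ut x t)); lra).
  assert (HL : 0 < L) by (unfold L; pose proof (Rabs_pos l); lra).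
  destruct (isd_lin phi (u x t) l (Hphi x t Ht) (eps / (2 * K)) ltac:(apply Rdiv_lt_0_compat; lra))
    as (eta & Heta & Heta').
  destruct (H x t Ht (eps / (2 * L)) ltac:(apply Rdiv_lt_0_compat; lra)) as (d2 & Hd2 & Hd2').
  destruct (TD_cont u ut x t H Ht (eta / 2) ltac:(lra)) as (d3 & Hd3 & Hd3').
  destruct (TD_lip u ut x t H Ht) as (d4 & Hd4 & Hd4').
  exists (Rmin d2 (Rmin d3 d4)). split; [repeat apply Rmin_pos; auto|]. intros s Hs Hst.
  pose proof (Rmin_l d2 (Rmin d3 d4)). pose proof (Rmin_r d2 (Rmin d3 d4)).
  pose proof (Rmin_l d3 d4). pose proof (Rmin_r d3 d4).
  specialize (Hd2' s Hs ltac:(lra)). specialize (Hd3' s Hs ltac:(lra)). specialize (Hd4' s Hs ltac:(lra)).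
  specialize (Heta' (u x s) ltac:(lra)). fold K in Hd4'.
  set (d := Rabs (s - t)) in *. assert (Hd0 : 0 <= d) by apply Rabs_pos.
  replace (phi (u x s) - phi (u x t) - l * ut x t * (s - t)) with
    ((phi (u x s) - phi (u x t) - l * (u x s - u x t)) + l * (u x s - u x t - ut x t * (s - t)))
    by ring.
  eapply Rle_trans; [apply Rabs_triang|].
  assert (T1 : eps / (2 * K) * Rabs (u x s - u x t) <= eps / 2 * d).
  { apply Rle_trans with (eps / (2 * K) * (K * d)).
    - apply Rmult_le_compat_l; auto. apply Rlt_le, Rdiv_lt_0_compat; lra.
    - right; field; lra. }
  assert (T2 : Rabs (l * (u x s - u x t - ut x t * (s - t))) <= eps / 2 * d).
  { rewrite Rabs_mult. apply Rle_trans with (L * (eps / (2 * L) * d)).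
    - apply Rmult_le_compat; try apply Rabs_pos; auto. unfold L; lra.
    - right; field; lra. }
  lra.
Qed.

Lemma RInt_mult_r (f : R -> R) a b c : ex_RInt f a b -> RInt (fun y => f y * c) a b = RInt f a b * c.
Proof.
  intros H. transitivity (RInt (fun y => scal c (f y)) a b).
  - apply RInt_ext. intros. rewrite Rmult_comm. reflexivity.
  - rewrite (RInt_scal (V:=R_CompleteNormedModule)) by auto. rewrite Rmult_comm. reflexivity.
Qed.

Lemma cont_opp (f : R -> R) x : continuous f x -> continuous (fun y => - f y) x.
Proof. intros H. exact (continuous_opp f x H). Qed.

Lemma exR_c (f : R -> R) a b : (forall y, continuous f y) -> ex_RInt f a b.
Proof. intros H. apply (ex_RInt_continuous (V:=R_CompleteNormedModule)). intros; auto. Qed.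

Definition clamp c := Rmax 0 (Rmin T c).

Lemma clamp_id c : It c -> clamp c = c.
Proof. unfold It, clamp, Rmax, Rmin; intros; repeat destruct Rle_dec; lra. Qed.
Lemma clamp_It c : It (clamp c).
Proof. unfold It, clamp, Rmax, Rmin; repeat destruct Rle_dec; lra. Qed.
Lemma clamp_dist c tau : It tau -> Rabs (clamp c - tau) <= Rabs (c - tau).
Proof.
  unfold It, clamp, Rmax, Rmin; intros; repeat destruct Rle_dec;
  unfold Rabs; repeat destruct Rcase_abs; lra.
Qed.

Lemma MVI (phi l : R -> R) t s K : It t -> It s ->
  (forall tau, Rmin t s <= tau <= Rmax t s -> forall eps, 0 < eps -> exists delta, 0 < delta /\
     forall sg, It sg -> Rabs (sg - tau) < delta ->
       Rabs (phi sg - phi tau - l tau * (sg - tau)) <= eps * Rabs (sg - tau)) ->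
  (forall tau, Rmin t s <= tau <= Rmax t s -> Rabs (l tau) <= K) ->
  Rabs (phi s - phi t) <= K * Rabs (s - t).
Proof.
  intros Ht Hs Hd Hl.
  assert (HIt : forall tau, Rmin t s <= tau <= Rmax t s -> It tau).
  { unfold It in *; unfold Rmin, Rmax; intros tau; destruct Rle_dec; lra. }
  set (psi := fun c => phi (clamp c)).
  destruct (MVT_gen psi t s l) as (c & Hc & Heq).
  - intros tau Htau. apply is_derive_Reals. intros eps Heps.
    assert (Htau' : 0 < tau < T).
    { unfold It in *; unfold Rmin, Rmax in Htau; destruct Rle_dec; lra. }
    destruct (Hd tau ltac:(lra) (eps/2) ltac:(lra)) as (d & Hd0 & Hd').
    assert (Hpos : 0 < Rmin d (Rmin tau (T - tau))) by (repeat apply Rmin_pos; lra).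
    exists (mkposreal _ Hpos). intros h Hh Hhd. simpl in Hhd.
    pose proof (Rmin_l d (Rmin tau (T - tau))). pose proof (Rmin_r d (Rmin tau (T - tau))).
    pose proof (Rmin_l tau (T - tau)). pose proof (Rmin_r tau (T - tau)).
    assert (Hin : It (tau + h)) by (unfold It; unfold Rabs in Hhd; destruct Rcase_abs; lra).
    unfold psi. rewrite !clamp_id by (auto; unfold It; lra).
    specialize (Hd' (tau + h) Hin ltac:(replace (tau + h - tau) with h by ring; lra)).
    replace (tau + h - tau) with h in Hd' by ring.
    replace ((phi (tau + h) - phi tau) / h - l tau) with ((phi (tau + h) - phi tau - l tau * h) / h)
      by (field; auto).
    unfold Rdiv. rewrite Rabs_mult, Rabs_inv.
    assert (Hh0 : 0 < Rabs h) by (apply Rabs_pos_lt; auto).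
    apply Rmult_lt_reg_r with (Rabs h); auto. rewrite Rmult_assoc, Rinv_l by lra.
    assert (eps/2 * Rabs h < eps * Rabs h) by (apply Rmult_lt_compat_r; lra). lra.
  - intros tau Htau. assert (Itau := HIt tau Htau).
    unfold continuity_pt, continue_in, limit1_in, limit_in. simpl. intros eps Heps.
    destruct (Hd tau Htau 1 Rlt_0_1) as (d & Hd0 & Hd').
    set (L := Rabs (l tau) + 1). assert (HL : 0 < L) by (unfold L; pose proof (Rabs_pos (l tau)); lra).
    exists (Rmin d (eps / (2 * L))). split; [apply Rmin_pos; auto; apply Rdiv_lt_0_compat; lra|].
    intros x (_ & Hx). unfold R_dist in *. unfold psi. rewrite (clamp_id tau) by auto.
    pose proof (Rmin_l d (eps / (2 * L))). pose proof (Rmin_r d (eps / (2 * L))).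
    pose proof (clamp_dist x tau Itau).
    specialize (Hd' (clamp x) (clamp_It x) ltac:(lra)).
    replace (phi (clamp x) - phi tau) with
      ((phi (clamp x) - phi tau - l tau * (clamp x - tau)) + l tau * (clamp x - tau)) by ring.
    eapply Rle_lt_trans; [apply Rabs_triang|]. rewrite Rabs_mult.
    assert (Rabs (l tau) * Rabs (clamp x - tau) <= Rabs (l tau) * Rabs (x - tau))
      by (apply Rmult_le_compat_l; [apply Rabs_pos|auto]).
    assert (L * Rabs (x - tau) < eps).
    { apply Rle_lt_trans with (L * (eps / (2 * L))).
      - apply Rmult_le_compat_l; lra.
      - replace (L * (eps / (2 * L))) with (eps / 2) by (field; lra). lra. }
    unfold L in *. lra.
  - unfold psi in Heq. rewrite !clamp_id in Heq by auto. rewrite Heq, Rabs_mult.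
    apply Rmult_le_compat_r; [apply Rabs_pos|]. apply Hl. auto.
Qed.

Lemma TD_int h ht : G0 h -> G0 ht -> TD h ht ->
  TD (fun x t => RInt (fun y => h y t) 0 x) (fun x t => RInt (fun y => ht y t) 0 x).
Proof.
  intros Gh Ght H x t Ht eps Heps.
  set (e := eps / (Rabs x + 1)).
  assert (He : 0 < e) by (apply Rdiv_lt_0_compat; pose proof (Rabs_pos x); lra).
  assert (Ght' := Ght). destruct Ght' as (_ & Hcht & Hu).
  assert (Gh' := Gh). destruct Gh' as (_ & Hch & _).
  destruct (Hu t Ht e He) as (d & Hd & Hd'). exists d; split; auto. intros s Hs Hst.
  assert (Hy : forall y, Rabs (h y s - h y t - ht y t * (s - t)) <= e * Rabs (s - t)).
  { intros y.
    assert (HIt : forall tau, Rmin t s <= tau <= Rmax t s -> It tau).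
    { unfold It in *; unfold Rmin, Rmax; intros tau; destruct Rle_dec; lra. }
    replace (h y s - h y t - ht y t * (s - t)) with
      ((h y s - ht y t * s) - (h y t - ht y t * t)) by ring.
    apply (MVI (fun tau => h y tau - ht y t * tau) (fun tau => ht y tau - ht y t)); auto.
    - intros tau Htau eps' Heps'. destruct (H y tau (HIt tau Htau) eps' Heps') as (d1 & Hd1 & Hd1').
      exists d1; split; auto. intros sg Hsg Hsgt.
      replace (h y sg - ht y t * sg - (h y tau - ht y t * tau) - (ht y tau - ht y t) * (sg - tau))
        with (h y sg - h y tau - ht y tau * (sg - tau)) by ring. auto.
    - intros tau Htau. apply Hd'; [apply HIt; auto|].
      unfold Rmin, Rmax in Htau; destruct Rle_dec; unfold Rabs in *; repeat destruct Rcase_abs; lra. }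
  assert (E : RInt (fun y => h y s) 0 x - RInt (fun y => h y t) 0 x
              - RInt (fun y => ht y t) 0 x * (s - t)
            = RInt (fun y => h y s - h y t - ht y t * (s - t)) 0 x).
  { rewrite (RInt_minus' (fun y => h y s - h y t)).
    - rewrite RInt_minus' by (apply exR_c; intros; apply Hch; auto).
      rewrite RInt_mult_r by (apply exR_c; intros; apply Hcht; auto). reflexivity.
    - apply exR_c. intros y. apply cont_plus; [apply Hch; auto|apply cont_opp; apply Hch; auto].
    - apply exR_c. intros y. apply cont_mult; [apply Hcht; auto|apply continuous_const]. }
  rewrite E. eapply Rle_trans.
  - apply (RInt_abs_bound _ x (e * Rabs (s - t))); auto.
    intros a b. apply exR_c. intros y. apply cont_plus.
    + apply cont_plus; [apply Hch; auto|apply cont_opp; apply Hch; auto].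
    + apply cont_opp. apply cont_mult; [apply Hcht; auto|apply continuous_const].
  - rewrite <- Rmult_assoc. apply Rmult_le_compat_r; [apply Rabs_pos|].
    apply Rle_trans with ((Rabs x + 1) * e).
    + apply Rmult_le_compat_r; [lra|lra].
    + right. unfold e. field. pose proof (Rabs_pos x); lra.
Qed.

Lemma TD_const c : TD (fun _ _ => c) (fun _ _ => 0).
Proof.
  intros x t Ht eps Heps. exists 1; split; [lra|]. intros s _ _.
  replace (c - c - 0 * (s - t)) with 0 by ring. rewrite Rabs_R0.
  apply Rmult_le_pos; [lra|apply Rabs_pos].
Qed.

Lemma TD_scal c u ut : TD u ut -> TD (fun x t => c * u x t) (fun x t => c * ut x t).
Proof.
  intros H. eapply TD_ext; [| |apply (TD_mult _ _ _ _ (TD_const c) H)]; intros; simpl; ring.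
Qed.

Lemma TD_spec x0 u ut : TD u ut -> TD (fun _ t => u x0 t) (fun _ t => ut x0 t).
Proof. intros H x t Ht. apply H; auto. Qed.

Lemma tcont_scal (c : R -> R) k :
  (forall t0, It t0 -> forall eps, 0 < eps -> exists delta, 0 < delta /\
     forall t, It t -> Rabs (t - t0) < delta -> Rabs (c t - c t0) <= eps) ->
  (forall t0, It t0 -> forall eps, 0 < eps -> exists delta, 0 < delta /\
     forall t, It t -> Rabs (t - t0) < delta -> Rabs (k * c t - k * c t0) <= eps).
Proof.
  intros H t0 Ht0 eps Heps.
  destruct (H t0 Ht0 (eps / (Rabs k + 1))) as (d & Hd & Hd').
  { apply Rdiv_lt_0_compat; pose proof (Rabs_pos k); lra. }
  exists d; split; auto. intros t Ht Htt. specialize (Hd' t Ht Htt).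
  replace (k * c t - k * c t0) with (k * (c t - c t0)) by ring. rewrite Rabs_mult.
  apply Rle_trans with ((Rabs k + 1) * (eps / (Rabs k + 1))).
  - apply Rmult_le_compat; try apply Rabs_pos; lra.
  - right; field; pose proof (Rabs_pos k); lra.
Qed.

Lemma isd_inv' y : 0 < y -> is_derive Rinv y (- (/ y * / y)).
Proof.
  intros Hy. eapply isd_eq; [apply (is_derive_inv (fun x => x) y 1 (is_derive_id y)); simpl; lra|].
  simpl. field. lra.
Qed.

Lemma main (n : nat) (a b : R -> R -> R) (a0 : R) :
  (4 <= n)%nat ->
  CtCk M T (n + 3) a ->
  (exists at_, tderiv T a at_ /\ CtCk M T n at_) ->
  CtCk M T (n + 2) b ->
  (exists bt, tderiv T b bt /\ CtCk M T n bt) ->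
  0 < a0 ->
  (forall x t, 0 <= x <= M -> 0 <= t <= T -> a0 <= a x t) ->
  (forall t, 0 <= t <= T -> 0 <= deltabar M a b t) ->
  (exists kg, 1 < kg /\
     forall x t, 0 <= x <= M -> 0 <= t <= T ->
       / kg <= gn M n a b x t <= kg) /\
  CtCk M T (n + 3) (gn M n a b) /\
  (exists gt, tderiv T (gn M n a b) gt /\ CtCk M T n gt) /\
  (forall t, 0 <= t <= T -> forall j, (j <= n)%nat ->
     Derive_n (fun y => gn M n a b y t) j 0 = Derive_n (fun y => gn M n a b y t) j M) /\
  (forall x t, 0 <= x <= M -> 0 <= t <= T ->
     (3/2 - INR n) * Derive (fun y => a y t) x - b x t
     - 3 * a x t * (Derive (fun y => gn M n a b y t) x / gn M n a b x t) <= 0).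
Proof.
  intros Hn Ca (at_ & Tda & Cat) Cb (bt & Tdb & Cbt) Ha0 Hlow Hdel.
  assert (Ga := CtCk_G _ _ Ca). assert (Gb := CtCk_G _ _ Cb).
  assert (Gat := CtCk_G _ _ Cat). assert (Gbt := CtCk_G _ _ Cbt).
  assert (Tda' := tderiv_TD _ _ Tda). assert (Tdb' := tderiv_TD _ _ Tdb).
  assert (Hpos : forall t, It t -> forall x, a0 <= a x t).
  { intros t Ht x. destruct (G_G0 _ _ Ga) as (Hp & _).
    destruct (per_eq M (fun y => a y t) HM (Hp t Ht) x) as (y & Hy & ->). apply Hlow; auto. }
  assert (Hpos' : forall t, It t -> forall x, 0 < a x t) by (intros t Ht x; specialize (Hpos t Ht x); lra).
  set (p := 1/2 - INR n / 3).
  assert (Gk : forall k, (k <= n + 3)%nat -> G k a) by (intros k Hk; apply (G_mono_le k (n+3)); auto).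
  assert (Gbk : forall k, (k <= n + 2)%nat -> G k b) by (intros k Hk; apply (G_mono_le k (n+2)); auto).
  assert (Gia : forall k, (k <= n + 3)%nat -> G k (fun x t => / a x t))
    by (intros k Hk; apply (G_inv k a a0); auto).
  assert (Gq : G (n + 2) (fun x t => b x t / a x t)).
  { apply (G_mult _ b (fun x t => / a x t)); auto. apply Gia; lia. }
  assert (Hdl : forall t, It t -> deltabar M a b t = / M * RInt (fun y => b y t / a y t) 0 M).
  { intros t Ht. unfold deltabar. f_equal. apply RInt_ext. intros y _.
    rewrite Rabs_pos_eq; auto. apply Rlt_le; auto. }
  assert (dl_cont : forall t0, It t0 -> forall eps, 0 < eps -> exists delta, 0 < delta /\
     forall t, It t -> Rabs (t - t0) < delta -> Rabs (deltabar M a b t - deltabar M a b t0) <= eps).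
  { intros t0 Ht0 eps Heps.
    destruct (tcont_scal (fun t => RInt (fun y => b y t / a y t) 0 M) (/ M)
       (int_tcont _ M (G_G0 _ _ Gq)) t0 Ht0 eps Heps) as (d & Hd & Hd').
    exists d; split; auto. intros t Ht Htt. rewrite !Hdl by auto. auto. }
  set (hh := fun x t => b x t / a x t - deltabar M a b t).
  assert (Ghh : G (n + 2) hh).
  { apply (G_plus _ (fun x t => b x t / a x t) (fun x t => - deltabar M a b t)); auto.
    apply (G_opp _ (fun _ t => deltabar M a b t)). apply G_tfun; auto. }
  assert (Hint0 : forall t, It t -> RInt (fun y => hh y t) 0 M = 0).
  { intros t Ht. unfold hh.
    rewrite (RInt_minus' (fun y => b y t / a y t) (fun _ => deltabar M a b t)).
    - rewrite RInt_const. change (scal (M - 0) (deltabar M a b t)) with ((M - 0) * deltabar M a b t).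
      rewrite Hdl by auto.
      assert (HX : forall X : R, X - (M - 0) * (/ M * X) = 0) by (intros; field; lra).
      exact (HX _).
    - exact (exR _ t 0 M (G_G0 _ _ Gq) Ht).
    - apply exR_c; intros; apply continuous_const. }
  set (I := fun x t => RInt (fun y => hh y t) 0 x).
  assert (GI : G (n + 3) I).
  { replace (n + 3)%nat with (S (n + 2)) by lia. apply G_int; auto. }
  assert (GA : G (n + 3) (fun x t => exp (p * ln (a x t)))).
  { apply (G_exp _ (fun x t => p * ln (a x t))). apply G_scal. eapply G_ln; eauto. }
  assert (GE : G (n + 3) (fun x t => exp (- (1/3) * I x t))).
  { apply (G_exp _ (fun x t => - (1/3) * I x t)). apply G_scal. auto. }
  assert (Ggn : G (n + 3) (gn M n a b)).
  { apply (G_mult _ (fun x t => exp (p * ln (a x t))) (fun x t => exp (- (1/3) * I x t))); auto. }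
  split; [|split; [apply G_CtCk; auto|split; [|split]]].
  -
    assert (GL : G0 (fun x t => p * ln (a x t) + - (1/3) * I x t)).
    { apply G0_plus; apply (G_G0 (n+3)); [apply G_scal; eapply G_ln; eauto|apply G_scal; auto]. }
    destruct (G0_bound _ GL) as (B & HB).
    exists (exp (Rabs B + 1)). split.
    + rewrite <- exp_0 at 1. apply exp_increasing. pose proof (Rabs_pos B); lra.
    + intros x t Hx Ht. unfold gn, Rpower. fold p. rewrite <- exp_plus.
      specialize (HB t Ht x). cbv beta in HB.
      assert (H1 : - (Rabs B + 1) < p * ln (a x t) + - (1/3) * I x t /\ p * ln (a x t) + - (1/3) * I x t < Rabs B + 1).
      { pose proof (Rle_abs (p * ln (a x t) + - (1/3) * I x t)).
        pose proof (Rle_abs (- (p * ln (a x t) + - (1/3) * I x t))). rewrite Rabs_Ropp in H0.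
        pose proof (Rle_abs B). lra. }
      split.
      * rewrite <- exp_Ropp. apply Rlt_le, exp_increasing. exact (proj1 H1).
      * apply Rlt_le, exp_increasing. exact (proj2 H1).
  - set (qt := fun x t => bt x t * / a x t + b x t * (- (/ a x t * / a x t) * at_ x t)).
    assert (TDia : TD (fun x t => / a x t) (fun x t => - (/ a x t * / a x t) * at_ x t)).
    { apply (TD_comp Rinv (fun y => - (/ y * / y)) a at_); auto.
      intros x t Ht. apply isd_inv'. apply Hpos'; auto. }
    assert (TDq : TD (fun x t => b x t / a x t) qt).
    { exact (TD_mult b bt _ _ Tdb' TDia). }
    assert (Gia_n : G n (fun x t => / a x t)) by (apply Gia; lia).
    assert (Gqt : G n qt).
    { apply (G_plus _ (fun x t => bt x t * / a x t) (fun x t => b x t * (- (/ a x t * / a x t) * at_ x t))).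
      - apply (G_mult _ bt (fun x t => / a x t)); auto.
      - apply (G_mult _ b (fun x t => - (/ a x t * / a x t) * at_ x t)); [apply Gbk; lia|].
        apply (G_mult _ (fun x t => - (/ a x t * / a x t)) at_); auto.
        apply (G_opp _ (fun x t => / a x t * / a x t)).
        apply (G_mult _ (fun x t => / a x t) (fun x t => / a x t)); auto. }
    assert (TDQ := TD_int _ _ (G_G0 _ _ Gq) (G_G0 _ _ Gqt) TDq).
    assert (TDdl : TD (fun _ t => deltabar M a b t) (fun _ t => / M * RInt (fun y => qt y t) 0 M)).
    { eapply TD_ext; [| |apply (TD_scal (/ M) _ _ (TD_spec M _ _ TDQ))].
      - intros x t Ht. cbv beta. rewrite Hdl by auto. reflexivity.
      - intros x t Ht. reflexivity. }
    set (hht := fun x t => qt x t - / M * RInt (fun y => qt y t) 0 M).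
    assert (TDhh : TD hh hht).
    { eapply TD_ext; [| |apply (TD_plus _ _ _ _ TDq (TD_scal (-1) _ _ TDdl))];
      intros x t Ht; unfold hh, hht; cbv beta; ring. }
    assert (dlt_cont := tcont_scal _ (/ M) (int_tcont qt M (G_G0 _ _ Gqt))).
    assert (Ghht : G n hht).
    { apply (G_plus _ qt (fun x t => - (/ M * RInt (fun y => qt y t) 0 M))); auto.
      apply (G_opp _ (fun _ t => / M * RInt (fun y => qt y t) 0 M)).
      apply (G_tfun n (fun t => / M * RInt (fun y => qt y t) 0 M)). exact dlt_cont. }
    assert (Hint0t : forall t, It t -> RInt (fun y => hht y t) 0 M = 0).
    { intros t Ht. unfold hht.
      rewrite (RInt_minus' (fun y => qt y t) (fun _ => / M * RInt (fun y => qt y t) 0 M)).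
      - rewrite RInt_const.
        change (scal (M - 0) (/ M * RInt (fun y => qt y t) 0 M))
          with ((M - 0) * (/ M * RInt (fun y => qt y t) 0 M)).
        assert (HX : forall X : R, X - (M - 0) * (/ M * X) = 0) by (intros; field; lra).
        exact (HX _).
      - exact (exR _ t 0 M (G_G0 _ _ Gqt) Ht).
      - apply exR_c; intros; apply continuous_const. }
    set (It_ := fun x t => RInt (fun y => hht y t) 0 x).
    assert (TDI : TD I It_) by exact (TD_int hh hht (G_G0 _ _ Ghh) (G_G0 _ _ Ghht) TDhh).
    assert (GIt : G n It_).
    { assert (Hn' : n = S (n - 1)) by lia. rewrite Hn'.
      apply G_int; [apply (G_mono_le _ n); [lia|auto]|auto]. }
    assert (TDA : TD (fun x t => exp (p * ln (a x t)))
                     (fun x t => exp (p * ln (a x t)) * (p * (/ a x t * at_ x t)))).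
    { apply (TD_comp exp exp (fun x t => p * ln (a x t))).
      - intros; apply is_derive_exp.
      - apply (TD_scal p (fun x t => ln (a x t))).
        apply (TD_comp ln Rinv a at_); auto. intros x t Ht. apply is_derive_ln. apply Hpos'; auto. }
    assert (TDE : TD (fun x t => exp (- (1/3) * I x t))
                     (fun x t => exp (- (1/3) * I x t) * (- (1/3) * It_ x t))).
    { apply (TD_comp exp exp (fun x t => - (1/3) * I x t)).
      - intros; apply is_derive_exp.
      - apply (TD_scal (- (1/3)) I). auto. }
    assert (TDg := TD_mult _ _ _ _ TDA TDE).
    assert (GAn : G n (fun x t => exp (p * ln (a x t)))) by (apply (G_mono_le _ (n+3)); [lia|auto]).
    assert (GEn : G n (fun x t => exp (- (1/3) * I x t))) by (apply (G_mono_le _ (n+3)); [lia|auto]).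
    eexists. split; [apply TD_tderiv; exact TDg|]. apply G_CtCk.
    apply G_plus; apply G_mult; auto.
    + apply G_mult; auto. apply G_scal. apply G_mult; auto.
    + apply G_mult; auto. apply G_scal. auto.
  - intros t Ht j Hj. destruct (G_CtCk _ _ Ggn) as (Hs & _). destruct (Hs t Ht) as (Hp & _).
    rewrite <- (Derive_per (fun y => gn M n a b y t) Hp j 0). rewrite Rplus_0_l. reflexivity.
  - intros x t Hx Ht.
    assert (Hax : is_derive (fun y => a y t) x (Derive (fun y => a y t) x)).
    { apply Derive_correct. destruct Ca as (Hs & _). destruct (Hs t Ht) as (_ & He & _).
      apply (He 1%nat ltac:(lia) x). }
    set (ax := Derive (fun y => a y t) x) in *.
    assert (Hpa := Hpos' t Ht x).
    assert (Hg : is_derive (fun y => gn M n a b y t) x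
       (exp (p * ln (a x t)) * (p * (/ a x t * ax)) * exp (- (1/3) * I x t)
        + exp (p * ln (a x t)) * (exp (- (1/3) * I x t) * (- (1/3) * hh x t)))).
    { apply (isd_mult (fun y => exp (p * ln (a y t))) (fun y => exp (- (1/3) * I y t))).
      - apply (isd_comp exp (fun y => p * ln (a y t))); [apply is_derive_exp|].
        apply is_derive_scal. apply (isd_comp ln (fun y => a y t)); [apply is_derive_ln; auto|exact Hax].
      - apply (isd_comp exp (fun y => - (1/3) * I y t)); [apply is_derive_exp|].
        apply is_derive_scal. apply isd_int; [exact (G_G0 _ _ Ghh)|exact Ht]. }
    assert (HD : Derive (fun y => gn M n a b y t) x =
       exp (p * ln (a x t)) * (p * (/ a x t * ax)) * exp (- (1/3) * I x t)
        + exp (p * ln (a x t)) * (exp (- (1/3) * I x t) * (- (1/3) * hh x t)))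
      by (apply is_derive_unique; exact Hg).
    rewrite HD.
    change (gn M n a b x t) with (exp (p * ln (a x t)) * exp (- (1/3) * I x t)).
    assert (HA := exp_pos (p * ln (a x t))). assert (HE := exp_pos (- (1/3) * I x t)).
    assert (Hd := Hdel t Ht). unfold hh.
    replace ((3 / 2 - INR n) * ax - b x t -
      3 * a x t * ((exp (p * ln (a x t)) * (p * (/ a x t * ax)) * exp (- (1 / 3) * I x t) +
        exp (p * ln (a x t)) * (exp (- (1 / 3) * I x t) * (- (1 / 3) * (b x t / a x t - deltabar M a b t)))) /
       (exp (p * ln (a x t)) * exp (- (1 / 3) * I x t))))
      with (- (a x t * deltabar M a b t)) by (unfold p in *; field; repeat split; lra).
    assert (0 <= a x t * deltabar M a b t) by (apply Rmult_le_pos; lra). lra.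
Qed.
End GS.

Theorem lemma3 (M T : R) (n : nat) (a b : R -> R -> R) (a0 : R) :
  0 < M -> 0 < T -> (4 <= n)%nat ->
  CtCk M T (n + 3) a ->
  (exists at_, tderiv T a at_ /\ CtCk M T n at_) ->
  CtCk M T (n + 2) b ->
  (exists bt, tderiv T b bt /\ CtCk M T n bt) ->
  0 < a0 ->
  (forall x t, 0 <= x <= M -> 0 <= t <= T -> a0 <= a x t) ->
  (forall t, 0 <= t <= T -> 0 <= deltabar M a b t) ->
  (* (C1) *)
  (exists kg, 1 < kg /\
     forall x t, 0 <= x <= M -> 0 <= t <= T ->
       / kg <= gn M n a b x t <= kg) /\
  (* (C2) *)
  CtCk M T (n + 3) (gn M n a b) /\
  (exists gt, tderiv T (gn M n a b) gt /\ CtCk M T n gt) /\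
  (* (C3) *)
  (forall t, 0 <= t <= T -> forall j, (j <= n)%nat ->
     Derive_n (fun y => gn M n a b y t) j 0 = Derive_n (fun y => gn M n a b y t) j M) /\
  (* (C4) *)
  (forall x t, 0 <= x <= M -> 0 <= t <= T ->
     (3/2 - INR n) * Derive (fun y => a y t) x - b x t
     - 3 * a x t * (Derive (fun y => gn M n a b y t) x / gn M n a b x t) <= 0).
Proof.
  intros HM HT. exact (main M T HM HT n a b a0).
Qed.
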